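(* Let $m<M$ be real numbers and let $X$ be a random variable taking values in $[m,M]$, either discrete (taking finitely many values $x_1,\dots,x_n\in[m,M]$ with probabilities $p_1,\dots,p_n$) or continuous (with probability density $f$ on $[m,M]$). Let $\mu_3$ be its third central moment. Then $$|\mu_3|\le\frac{(M-m)^3}{6\sqrt3}.$$
   Context: The mean is $\mu_1'=\sum_{i=1}^n p_i x_i$ (discrete case) or $\mu_1'=\int_m^M x f(x)\,dx$ (continuous case), where $\sum p_i=1$, resp. $\int_m^M f(x)\,dx=1$. The $r$-th central moment is $\mu_r=\sum_{i=1}^n p_i (x_i-\mu_1')^r$, resp. $\mu_r=\int_m^M (x-\mu_1')^r f(x)\,dx$. *)

(* Defs.v *)
From mathcomp Require Import all_boot all_order all_algebra.
From mathcomp Require Import all_classical all_reals all_analysis.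
Set Implicit Arguments. Unset Strict Implicit. Unset Printing Implicit Defensive.
Import Order.TTheory GRing.Theory Num.Theory.
Import numFieldNormedType.Exports.
Local Open Scope classical_set_scope.
Local Open Scope ring_scope.

Definition disc_mean (R : realType) (n : nat) (p x : 'I_n -> R) : R :=
  \sum_(i < n) p i * x i.

Definition disc_central_moment (R : realType) (n : nat) (p x : 'I_n -> R)
  (r : nat) : R :=
  \sum_(i < n) p i * (x i - disc_mean p x) ^+ r.

Definition cont_mean (R : realType) (m M : R) (f : R -> R) : R :=
  Rintegral lebesgue_measure `[m, M] (fun x => x * f x).

Definition cont_central_moment (R : realType) (m M : R) (f : R -> R)
  (r : nat) : R :=
  Rintegral lebesgue_measure `[m, M]
    (fun x => (x - cont_mean m M f) ^+ r * f x).

(* Main.v *)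
Require Import Defs.
From mathcomp Require Import all_boot all_order all_algebra.
From mathcomp Require Import all_classical all_reals all_analysis.
From mathcomp Require Import ring lra.
Import Order.TTheory GRing.Theory Num.Theory.
Import numFieldNormedType.Exports.
Local Open Scope classical_set_scope.
Local Open Scope ring_scope.

Section cont.
Variables (R : realType) (m M : R) (f : R -> R).
Hypothesis mf : measurable_fun `[m, M] f.
Hypothesis intf : lebesgue_measure.-integrable `[m, M] (EFin \o f).

Let mD : measurable (`[m, M] : set R). Proof. exact: measurable_itv. Qed.

Lemma int_mul (h : R -> R) (C : R) : measurable_fun `[m, M] h ->
  (forall x, m <= x <= M -> `|h x| <= C) ->
  lebesgue_measure.-integrable `[m, M] (EFin \o (fun x => h x * f x)).
Proof.
move=> mh hC.
have -> : (EFin \o (fun x => h x * f x)) = ((EFin \o h) \* (EFin \o f))%E.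
  by apply/funext => x /=; rewrite EFinM.
apply: integrableMr => //.
exists C; split; first exact: num_real.
move=> B CB x; rewrite /= in_itv /= => Dx; apply: le_trans (hC x Dx) _; exact: ltW.
Qed.

Lemma int_pow (c : R) (k : nat) :
  lebesgue_measure.-integrable `[m, M] (EFin \o (fun x => (x - c) ^+ k * f x)).
Proof.
apply: (@int_mul _ ((`|m| + `|M| + `|c|) ^+ k)).
  apply: measurable_realfun.measurable_funX; apply: measurable_realfun.measurable_funB => //.
move=> x /andP[h1 h2].
rewrite normrX; apply: lerXn2r; rewrite ?nnegrE //.
apply: (le_trans (ler_normB _ _)); rewrite lerD2r.
have := ler_norm (- m); rewrite normrN => hm.
have := ler_norm M; have := normr_ge0 M; have := normr_ge0 m.
rewrite ler_norml; move=> *; apply/andP; split; lra.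
Qed.

Lemma intZ (c : R) (g : R -> R) :
  lebesgue_measure.-integrable `[m, M] (EFin \o g) ->
  lebesgue_measure.-integrable `[m, M] (EFin \o (fun x => c * g x)).
Proof.
move=> ig.
have -> : (EFin \o (fun x => c * g x)) = (fun x => c%:E * (EFin \o g) x)%E.
  by apply/funext => x /=; rewrite EFinM.
exact: integrableZl.
Qed.

Lemma intD (g h : R -> R) :
  lebesgue_measure.-integrable `[m, M] (EFin \o g) ->
  lebesgue_measure.-integrable `[m, M] (EFin \o h) ->
  lebesgue_measure.-integrable `[m, M] (EFin \o (fun x => g x + h x)).
Proof.
move=> ig ih.
have -> : (EFin \o (fun x => g x + h x)) = ((EFin \o g) \+ (EFin \o h))%E.
  by apply/funext => x /=; rewrite EFinD.
exact: integrableD.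
Qed.

Hypothesis f0 : forall x, m <= x <= M -> 0 <= f x.
Hypothesis f1 : (\int[lebesgue_measure]_(x in `[m, M]) (f x)%:E = 1%:E)%E.

Lemma cont_pos (c0 c1 c2 c3 : R) :
  (forall y, m - cont_mean m M f <= y <= M - cont_mean m M f ->
        0 <= c0 + c1 * y + c2 * y ^+ 2 + c3 * y ^+ 3) ->
  0 <= c0 + c2 * cont_central_moment m M f 2 + c3 * cont_central_moment m M f 3.
Proof.
move=> hq.
set mu := cont_mean m M f.
set g := fun k x => (x - mu) ^+ k * f x.
have ig : forall k, lebesgue_measure.-integrable `[m, M] (EFin \o g k).
  by move=> k; exact: int_pow.
have If : Rintegral lebesgue_measure `[m, M] f = 1 by rewrite /Rintegral f1.
have iff : lebesgue_measure.-integrable `[m, M] (EFin \o f) by [].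
have ix : lebesgue_measure.-integrable `[m, M] (EFin \o (fun x => x * f x)).
  have := int_pow 0 1.
  by rewrite (_ : (fun x => (x - 0) ^+ 1 * f x) = (fun x => x * f x)) //;
    apply/funext => x; rewrite subr0 expr1.
have I0 : Rintegral lebesgue_measure `[m, M] (g 0) = 1.
  by rewrite (_ : g 0 = f) //; apply/funext => x; rewrite /g expr0 mul1r.
have I1 : Rintegral lebesgue_measure `[m, M] (g 1) = 0.
  rewrite (_ : g 1 = (fun x => x * f x - mu * f x)); last first.
    by apply/funext => x; rewrite /g expr1 mulrBl.
  rewrite RintegralB //; last exact: intZ.
  rewrite RintegralZl // If mulr1 -/(cont_mean m M f) -/mu; exact: subrr.
have -> : c0 + c2 * cont_central_moment m M f 2 + c3 * cont_central_moment m M f 3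
  = Rintegral lebesgue_measure `[m, M]
      (fun x => c0 * g 0 x + c1 * g 1 x + c2 * g 2 x + c3 * g 3 x).
  rewrite RintegralD //; last 2 first.
  - by apply: intD; [apply: intD|]; exact: intZ.
  - exact: intZ.
  rewrite RintegralD //; last 2 first.
  - by apply: intD; exact: intZ.
  - exact: intZ.
  rewrite RintegralD //; try exact: intZ.
  rewrite !RintegralZl // If I1 /cont_central_moment -/mu /g; ring.
apply: Rintegral_ge0 => x; rewrite /= in_itv /= => /andP[h1 h2].
have -> : c0 * g 0 x + c1 * g 1 x + c2 * g 2 x + c3 * g 3 x =
  (c0 + c1 * (x - mu) + c2 * (x - mu) ^+ 2 + c3 * (x - mu) ^+ 3) * f x.
  by rewrite /g; ring.
apply: mulr_ge0; last by apply: f0; rewrite h1 h2.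
apply: hq; rewrite -/mu; apply/andP; split; lra.
Qed.

End cont.
Lemma key_poly (R : realType) (a b r : R) : 0 <= a -> 0 <= b -> 0 < r -> r ^+ 2 = 3 ->
  6 * r * (a * b * (b - a)) <= (a + b) ^+ 3.
Proof.
move=> a0 b0 r0 r2.
set s := (b - a) / 2. set d := a + b.
have E : d ^+ 3 - 6 * r * (a * b * (b - a)) =
   12 * r * (s - d * r / 6) ^+ 2 * (s + d * r / 3) + (r ^+ 2 - 3) * (d^+2 * s * r - d ^+ 3 * (r ^+ 2 + 3) / 9).
  by rewrite /s /d; field.
rewrite r2 subrr mul0r addr0 in E.
have h1 : 0 <= s + d * r / 3.
  have : 3 / 2 <= r by nra.
  rewrite /s /d => hr. nra.
rewrite -subr_ge0 E; apply: mulr_ge0 => //; apply: mulr_ge0; [nra|exact: sqr_ge0].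
Qed.

Lemma upper (R : realType) (a b S T : R) : 0 <= a -> 0 <= b -> 0 <= S -> S <= a * b ->
  (forall t, T <= t ^+ 2 * b + (b + 2 * t) * S) ->
  T <= (a + b) ^+ 3 / (6 * Num.sqrt 3).
Proof.
move=> a0 b0 S0 Sab hT.
set r := Num.sqrt 3.
have r0 : 0 < r by rewrite sqrtr_gt0; lra.
have r2 : r ^+ 2 = 3 by rewrite sqr_sqrtr //; lra.
have K0 : 0 <= (a + b) ^+ 3 / (6 * r).
  apply: divr_ge0; [apply: exprn_ge0; lra | nra].
have [b00|bp] := eqVneq b 0.
  have hS : S = 0 by move: Sab; rewrite b00 mulr0 => ?; lra.
  have := hT 0; rewrite hS expr0n /= => h; apply: (le_trans _ K0); rewrite b00 in h; lra.
have bp' : 0 < b by rewrite lt_def bp.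
have := hT (- S / b).
have -> : (- S / b) ^+ 2 * b + (b + 2 * (- S / b)) * S = (b ^+ 2 * S - S ^+ 2) / b.
  by field.
move=> hT'.
have main : 6 * r * (b ^+ 2 * S - S ^+ 2) <= b * (a + b) ^+ 3.
  have [hA|hB] := lerP (2 * a) b.
  - have kp := @key_poly _ a b r a0 b0 r0 r2.
    have g1 : 0 <= b ^+ 2 - a * b - S.
      have : 0 <= b * (b - 2 * a) by apply: mulr_ge0; lra.
      nra.
    have g2 : 0 <= (a * b - S) * (b ^+ 2 - a * b - S) by apply: mulr_ge0; lra.
    have f1 : b ^+ 2 * S - S ^+ 2 <= a * b ^+ 2 * (b - a) by nra.
    nra.
  - have f1 : b ^+ 2 * S - S ^+ 2 <= b ^+ 4 / 4.
      have := sqr_ge0 (S - b ^+ 2 / 2); nra.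
    have hr : r <= 9 / 4 by nra.
    have hd : (3 * b) ^+ 3 <= (2 * (a + b)) ^+ 3.
      apply: lerXn2r; rewrite ?inE ?nnegrE; lra.
    rewrite !exprMn in hd.
    have h4 : 0 <= b ^+ 3 by apply: exprn_ge0.
    have h5 : 6 * r * (b ^+ 2 * S - S ^+ 2) <= 6 * r * (b ^+ 4 / 4).
      by rewrite ler_pM2l //; nra.
    apply: (le_trans h5).
    have -> : b ^+ 4 = b * b ^+ 3 by rewrite exprS.
    have h6 : 6 * r * (b * b ^+ 3 / 4) = b * (3 * r / 2 * b ^+ 3) by field.
    rewrite h6 ler_pM2l //.
    have : 3 * r / 2 <= 27 / 8 by lra.
    move: hd; rewrite (_ : 3 ^+ 3 = 27 :> R); last by rewrite !exprS expr0; lra.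
    rewrite (_ : 2 ^+ 3 = 8 :> R); last by rewrite !exprS expr0; lra.
    nra.
rewrite ler_pdivlMr // in hT'.
rewrite ler_pdivlMr; last nra.
nra.
Qed.

Lemma from_pos (R : realType) (m M mu S T : R) :
  (forall c0 c1 c2 c3 : R,
     (forall y, m - mu <= y <= M - mu -> 0 <= c0 + c1 * y + c2 * y ^+ 2 + c3 * y ^+ 3) ->
     0 <= c0 + c2 * S + c3 * T) ->
  `|T| <= (M - m) ^+ 3 / (6 * Num.sqrt 3).
Proof.
move=> P.
set a := mu - m. set b := M - mu.
have hMm : M - m = a + b by rewrite /a /b; ring.
have a0 : 0 <= a.
  have := P a 1 0 0 => h; suff : 0 <= a + 0 * S + 0 * T by lra.
  apply: h => y /andP[h1 h2]; rewrite /a; lra.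
have b0 : 0 <= b.
  have := P b (-1) 0 0 => h; suff : 0 <= b + 0 * S + 0 * T by lra.
  apply: h => y /andP[h1 h2]; rewrite /b; lra.
have S0 : 0 <= S.
  have := P 0 0 1 0 => h; suff : 0 <= 0 + 1 * S + 0 * T by lra.
  apply: h => y _; have := sqr_ge0 y; lra.
have Sab : S <= a * b.
  have := P (a * b) (b - a) (-1) 0 => h.
  suff : 0 <= a * b + -1 * S + 0 * T by lra.
  apply: h => y /andP[h1 h2].
  have : 0 <= (y + a) * (b - y) by apply: mulr_ge0; rewrite /a /b; lra.
  nra.
have U : T <= (a + b) ^+ 3 / (6 * Num.sqrt 3).
  apply: (@upper R a b S T a0 b0 S0 Sab) => t.
  have := P (t ^+ 2 * b) (- (t ^+ 2 + 2 * t * b)) (b + 2 * t) (-1).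
  have H : 0 <= t ^+ 2 * b + (b + 2 * t) * S + -1 * T -> T <= t ^+ 2 * b + (b + 2 * t) * S.
    lra.
  move=> h; apply: H; apply: h => y /andP[h1 h2].
  have : 0 <= (y - t) ^+ 2 * (b - y) by apply: mulr_ge0; [apply: sqr_ge0| rewrite /b; lra].
  suff -> : (y - t) ^+ 2 * (b - y) = t ^+ 2 * b + - (t ^+ 2 + 2 * t * b) * y + (b + 2 * t) * y ^+ 2 + -1 * y ^+ 3 by [].
  ring.
have L : - T <= (b + a) ^+ 3 / (6 * Num.sqrt 3).
  apply: (@upper R b a S (- T) b0 a0 S0 _) => [|t]; first by rewrite mulrC.
  have := P (t ^+ 2 * a) (t ^+ 2 + 2 * t * a) (a + 2 * t) 1.
  have H : 0 <= t ^+ 2 * a + (a + 2 * t) * S + 1 * T -> - T <= t ^+ 2 * a + (a + 2 * t) * S.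
    lra.
  move=> h; apply: H; apply: h => y /andP[h1 h2].
  have : 0 <= (y + t) ^+ 2 * (a + y) by apply: mulr_ge0; [apply: sqr_ge0| rewrite /a; lra].
  suff -> : (y + t) ^+ 2 * (a + y) = t ^+ 2 * a + (t ^+ 2 + 2 * t * a) * y + (a + 2 * t) * y ^+ 2 + 1 * y ^+ 3 by [].
  ring.
rewrite hMm; rewrite (addrC b a) in L.
by rewrite ler_norml U andbT lerNl.
Qed.
Lemma disc_pos (R : realType) (m M : R) n (p x : 'I_n -> R) :
  (forall i, 0 <= p i) -> \sum_(i < n) p i = 1 -> (forall i, m <= x i <= M) ->
  forall c0 c1 c2 c3 : R,
     (forall y, m - disc_mean p x <= y <= M - disc_mean p x ->
        0 <= c0 + c1 * y + c2 * y ^+ 2 + c3 * y ^+ 3) ->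
     0 <= c0 + c2 * disc_central_moment p x 2 + c3 * disc_central_moment p x 3.
Proof.
move=> p0 p1 xr c0 c1 c2 c3 hq.
set mu := disc_mean p x.
have E1 : \sum_(i < n) p i * (x i - mu) = 0.
  under eq_bigr do rewrite mulrBr.
  by rewrite sumrB -mulr_suml p1 mul1r subrr.
have -> : c0 + c2 * disc_central_moment p x 2 + c3 * disc_central_moment p x 3 =
   \sum_(i < n) p i * (c0 + c1 * (x i - mu) + c2 * (x i - mu) ^+ 2 + c3 * (x i - mu) ^+ 3).
  rewrite /disc_central_moment -/mu.
  under [RHS]eq_bigr do rewrite !mulrDr (mulrCA (p _) c1) (mulrCA (p _) c2) (mulrCA (p _) c3).
  rewrite !big_split /= -!mulr_sumr -!mulr_suml p1 -/(disc_mean p x) -/mu; ring.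
apply: sumr_ge0 => i _; apply: mulr_ge0 => //; apply: hq.
have := xr i; move=> /andP[h1 h2]; rewrite -/mu; apply/andP; split; lra.
Qed.

Theorem theorem2p3 (R : realType) (m M : R) (hmM : m < M) :
  (* discrete case *)
  (forall (n : nat) (p x : 'I_n -> R),
      (forall i, 0 <= p i) ->
      \sum_(i < n) p i = 1 ->
      (forall i, m <= x i <= M) ->
      `|disc_central_moment p x 3| <= (M - m) ^+ 3 / (6 * Num.sqrt 3))
  /\
  (* continuous case *)
  (forall f : R -> R,
      measurable_fun `[m, M] f ->
      (forall x, m <= x <= M -> 0 <= f x) ->
      lebesgue_measure.-integrable `[m, M] (EFin \o f) ->
      (\int[lebesgue_measure]_(x in `[m, M]) (f x)%:E = 1%:E)%E ->
      `|cont_central_moment m M f 3| <= (M - m) ^+ 3 / (6 * Num.sqrt 3)).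
Proof.
split.
- move=> n p x p0 p1 xr.
  exact: (@from_pos R m M _ _ _ (@disc_pos R m M n p x p0 p1 xr)).
- move=> f mf f0 intf f1.
  exact: (@from_pos R m M _ _ _ (@cont_pos R m M f intf f0 f1)).
Qed.
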